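(* Let $\rho>0$ and suppose that, for each value of $c^S>0$, the variable-window IPT thresholds satisfy $c_n^D=0$ for all $n\leq(1+\rho)\frac{c^S}{\underline{q}}$ (the values $c_n^D\geq0$ for larger $n$ being arbitrary). Then $$\limsup_{c^S\to\infty}\frac{\mathrm{WADD}(t_I)}{c^S}\leq\frac{2}{\underline{q}}.$$
   Context: Setup. Let $\mathcal{A}=\{a_1,\dots,a_m\}$ be a finite alphabet and $\mathcal{P}$ the set of probability mass functions (p.m.f.s) on $\mathcal{A}$. $I(f\|f')=\sum_{a}f(a)\log\frac{f(a)}{f'(a)}$ is the Kullback–Leibler divergence. A known pre-change p.m.f. $f_0\in\mathcal{P}$ is fixed. $q:\mathcal{P}\to\mathbb{R}$ is quasiconcave and $L$-Lipschitz with respect to $\ell_1$, with $q_0:=q(f_0)<0<\underline{q}$, and the set of possible post-change p.m.f.s $\mathcal{P}_1$ is a nonempty subset of $\{f: q(f)\geq\underline{q}\}$. Under $P_{f_1,t_1}$ (expectation $E_{f_1,t_1}$), $X_1,\dots,X_{t_1-1}$ are i.i.d. $f_0$ and $X_{t_1},X_{t_1+1},\dots$ are i.i.d. $f_1$, independent of the former. For $i\leq j$, $\hat f_{X_i^j}$ is the empirical p.m.f. of $X_i,\dots,X_j$. $(x)^+=\max\{x,0\}$. For a stopping time $t$, the worst average detection delay is $\mathrm{WADD}(t)=\sup_{f_1\in\mathcal{P}_1,\,t_1\geq1}\operatorname{ess\,sup}_{X_1^{t_1-1}}E_{f_1,t_1}\left((t-t_1+1)^+\mid X_1^{t_1-1}\right)$.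 Variable-window IPT. Parameters: $c^S>0$ and a sequence $(c_n^D)_{n\geq1}$ of nonnegative thresholds. For $n\geq1$ let $f_n^*=\arg\min_{f\in\mathcal{P}:\,q(f)\geq c^S/n}I(f\|f_0)$. Put $Q(i,j)=(j-i+1)q(\hat f_{X_i^j})$ for $i\leq j$ and $Q(j+1,j)=0$. Set $\tau_1=1$ and for $k\geq1$: $S_k=\max_{\tau_k\leq i\leq k+1}Q(i,k)$, with $i_k$ a maximizing index and $n_k=k-i_k+1$; $D_k=I(\hat f_{X_{i_k}^k}\|f_{n_k}^* )$; $\tau_{k+1}=k+1$ if $S_k\geq c^S$ and $D_k<c^D_{n_k}$ (restart), and $\tau_{k+1}=\tau_k$ otherwise. The IPT stopping time is $t_I=\inf\{k: S_k\geq c^S\text{ and }D_k\geq c^D_{n_k}\}$. *)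

(* Defs.v *)
From Stdlib Require Import Reals List Arith.
Import ListNotations.
Open Scope R_scope.

(* Alphabet A = {0,...,m-1}; a p.m.f. is a function nat -> R, nonnegative
   on A, zero outside A, summing to 1 over A. *)
Definition sumA (m : nat) (F : nat -> R) : R :=
  fold_right (fun a acc => F a + acc) 0 (seq 0 m).

Definition is_pmf (m : nat) (f : nat -> R) : Prop :=
  (forall a, (a < m)%nat -> 0 <= f a) /\
  (forall a, (m <= a)%nat -> f a = 0) /\
  sumA m f = 1.

Definition l1dist (m : nat) (f g : nat -> R) : R :=
  sumA m (fun a => Rabs (f a - g a)).

Definition quasiconcave_on (m : nat) (q : (nat -> R) -> R) : Prop :=
  forall f g lam, is_pmf m f -> is_pmf m g -> 0 <= lam <= 1 ->
    Rmin (q f) (q g) <= q (fun a => lam * f a + (1 - lam) * g a).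

Definition lipschitz_on (m : nat) (q : (nat -> R) -> R) (L : R) : Prop :=
  forall f g, is_pmf m f -> is_pmf m g -> Rabs (q f - q g) <= L * l1dist m f g.

(* Kullback-Leibler divergence with values in R ∪ {+oo}:
   None = +oo (some a with f a > 0 = g a); convention 0 log 0 = 0. *)
Definition posb (r : R) : bool := if Rlt_dec 0 r then true else false.

Definition KL_finite (m : nat) (f g : nat -> R) : bool :=
  forallb (fun a => orb (negb (posb (f a))) (posb (g a))) (seq 0 m).

Definition KL_sum (m : nat) (f g : nat -> R) : R :=
  sumA m (fun a => if posb (f a) then f a * ln (f a / g a) else 0).

Definition KL (m : nat) (f g : nat -> R) : option R :=
  if KL_finite m f g then Some (KL_sum m f g) else None.

Definition KL_geb (m : nat) (f g : nat -> R) (c : R) : bool :=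
  match KL m f g with
  | None => true
  | Some v => if Rle_dec c v then true else false
  end.

Definition KL_le (m : nat) (g h f0 : nat -> R) : Prop :=
  match KL m h f0 with
  | None => True
  | Some vh => match KL m g f0 with Some vg => vg <= vh | None => False end
  end.

Definition is_fstar (m : nat) (q : (nat -> R) -> R) (f0 : nat -> R) (c : R)
  (g : nat -> R) : Prop :=
  (exists f, is_pmf m f /\ c <= q f) ->
  is_pmf m g /\ c <= q g /\
  (forall f, is_pmf m f -> c <= q f -> KL_le m g f f0).

(* Observation words: x = [X_1; X_2; ...]; letter x l = X_l (l >= 1). *)
Definition letter (x : list nat) (l : nat) : nat := nth (l - 1) x 0%nat.

Definition emp (m : nat) (x : list nat) (i j : nat) : nat -> R :=
  fun a => if (a <? m)%nat then
     INR (length (filter (fun l => Nat.eqb (letter x l) a) (seq i (S j - i))))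
       / INR (S j - i)
   else 0.

(* Q(i,j) = (j-i+1) q(emp X_i^j); equals 0 for i = j+1 *)
Definition Qw (m : nat) (q : (nat -> R) -> R) (x : list nat) (i j : nat) : R :=
  INR (S j - i) * q (emp m x i j).

Definition is_window_max (m : nat) (q : (nat -> R) -> R) (tau k : nat)
  (w : list nat) (i : nat) : Prop :=
  (tau <= i <= S k)%nat /\
  (forall i', (tau <= i' <= S k)%nat -> Qw m q w i' k <= Qw m q w i k).

(* State after processing X_1..X_k: (tau_{k+1}, [t_I <= k]). *)
Fixpoint ipt_state (m : nat) (q : (nat -> R) -> R) (cS : R) (cD : nat -> R)
  (fstar : nat -> nat -> R) (sel : nat -> nat -> list nat -> nat)
  (x : list nat) (k : nat) : nat * bool :=
  match k with
  | O => (1%nat, false)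
  | S k0 =>
    let (tau, stopped) := ipt_state m q cS cD fstar sel x k0 in
    let w := firstn k x in
    let i := sel tau k w in
    let n := (S k - i)%nat in
    let Sk := Qw m q w i k in
    let sOK := if Rle_dec cS Sk then true else false in
    let dOK := KL_geb m (emp m w i k) (fstar n) (cD n) in
    ((if andb sOK (negb dOK) then S k else tau), orb stopped (andb sOK dOK))
  end.

Fixpoint words (m j : nat) : list (list nat) :=
  match j with
  | O => [[]]
  | S j0 => flat_map (fun w => map (fun a => a :: w) (seq 0 m)) (words m j0)
  end.

Definition wprob (f : nat -> R) (w : list nat) : R :=
  fold_right (fun a acc => f a * acc) 1 w.

(* P_{f1,t1}(t_I > t1 - 1 + j | X_1^{t1-1} = xs), where t1 = length xs + 1 *)
Definition survive_prob (m : nat) (q : (nat -> R) -> R) (cS : R) (cD : nat -> R)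
  (fstar : nat -> nat -> R) (sel : nat -> nat -> list nat -> nat)
  (f1 : nat -> R) (xs : list nat) (j : nat) : R :=
  fold_right (fun ys acc =>
     wprob f1 ys *
     (if snd (ipt_state m q cS cD fstar sel (xs ++ ys) (length xs + j))
      then 0 else 1) + acc) 0 (words m j).

(* Partial sums of E((t_I - t1 + 1)^+ | X_1^{t1-1}) = sum_{j>=0} P(t_I >= t1 + j | ..) *)
Definition delay_partial m q cS cD fstar sel f1 xs (N : nat) : R :=
  fold_right (fun j acc => survive_prob m q cS cD fstar sel f1 xs j + acc) 0
    (seq 0 (S N)).

(* WADD(t_I) <= B: for every f1 in P1, t1 >= 1 and every prefix of positive
   f0-probability (ess sup over a discrete space), the conditional expected
   delay (a series of nonnegative terms) is <= B. *)
Definition WADD_le m q (P1 : (nat -> R) -> Prop) (f0 : nat -> R) cS cD fstar sel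
  (B : R) : Prop :=
  forall f1, P1 f1 ->
  forall xs : list nat, (forall a, In a xs -> (a < m)%nat /\ 0 < f0 a) ->
  forall N, delay_partial m q cS cD fstar sel f1 xs N <= B.

(* Main.v *)
Require Import Defs.
From Stdlib Require Import Reals List Arith Lia Lra ZArith Classical.
Import ListNotations.
Open Scope R_scope.

Definition lsum {A : Type} (l : list A) (F : A -> R) : R :=
  fold_right (fun x acc => F x + acc) 0 l.

Lemma lsum_nil {A} (F : A -> R) : lsum [] F = 0.
Proof. reflexivity. Qed.
Lemma lsum_cons {A} (x : A) l F : lsum (x :: l) F = F x + lsum l F.
Proof. reflexivity. Qed.
Lemma lsum_app {A} (l1 l2 : list A) F : lsum (l1 ++ l2) F = lsum l1 F + lsum l2 F.
Proof. induction l1; simpl; [lra|]. unfold lsum in *; simpl; rewrite IHl1; lra. Qed.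
Lemma lsum_plus {A} (l : list A) F G :
  lsum l (fun x => F x + G x) = lsum l F + lsum l G.
Proof. induction l; unfold lsum in *; simpl; [lra|]. rewrite IHl; lra. Qed.
Lemma lsum_scal {A} (l : list A) c F : lsum l (fun x => c * F x) = c * lsum l F.
Proof. induction l; unfold lsum in *; simpl; [lra|]. rewrite IHl; lra. Qed.
Lemma lsum_le {A} (l : list A) F G :
  (forall x, In x l -> F x <= G x) -> lsum l F <= lsum l G.
Proof. induction l; intros H; unfold lsum in *; simpl; [lra|].
  assert (F a <= G a) by (apply H; left; auto).
  assert (fold_right (fun x acc => F x + acc) 0 l <= fold_right (fun x acc => G x + acc) 0 l)
   by (apply IHl; intros; apply H; right; auto). lra. Qed.
Lemma lsum_ext {A} (l : list A) F G :
  (forall x, In x l -> F x = G x) -> lsum l F = lsum l G.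
Proof. intros H; apply Rle_antisym; apply lsum_le; intros x Hx; rewrite H; auto; lra. Qed.
Lemma lsum_nonneg {A} (l : list A) F : (forall x, In x l -> 0 <= F x) -> 0 <= lsum l F.
Proof. intros H. replace 0 with (lsum l (fun _ => 0)). apply lsum_le; auto.
  induction l; unfold lsum in *; simpl; auto. rewrite IHl; [lra|]. intros; apply H; right; auto. Qed.
Lemma lsum_const {A} (l : list A) c : lsum l (fun _ => c) = INR (length l) * c.
Proof. induction l; unfold lsum in *; simpl length; [simpl; lra|].
  rewrite S_INR. simpl. rewrite IHl. lra. Qed.
Lemma lsum_swap {A B} (l1 : list A) (l2 : list B) F :
  lsum l1 (fun x => lsum l2 (fun y => F x y)) = lsum l2 (fun y => lsum l1 (fun x => F x y)).
Proof. induction l1.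
  - rewrite lsum_nil. transitivity (lsum l2 (fun _ : B => 0)).
    rewrite lsum_const; lra. apply lsum_ext; intros; rewrite lsum_nil; auto.
  - rewrite lsum_cons, IHl1. rewrite <- lsum_plus. apply lsum_ext. intros. reflexivity. Qed.
Lemma lsum_flat_map {A B} (g : A -> list B) l F :
  lsum (flat_map g l) F = lsum l (fun x => lsum (g x) F).
Proof. induction l; auto. simpl flat_map. rewrite lsum_app, IHl. reflexivity. Qed.
Lemma lsum_map {A B} (g : A -> B) l F : lsum (map g l) F = lsum l (fun x => F (g x)).
Proof. induction l; auto. simpl map. rewrite !lsum_cons, IHl. reflexivity. Qed.

Lemma sumA_lsum m F : sumA m F = lsum (seq 0 m) F.
Proof. reflexivity. Qed.

Lemma words_S m n F :
  lsum (words m (S n)) F = lsum (words m n) (fun w => lsum (seq 0 m) (fun a => F (a :: w))).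
Proof. simpl. rewrite lsum_flat_map. apply lsum_ext. intros. apply lsum_map. Qed.

Lemma words_app m j B F :
  lsum (words m (j + B)) F =
  lsum (words m j) (fun ys => lsum (words m B) (fun zs => F (ys ++ zs))).
Proof. revert F. induction j; intros F.
  - change (words m 0) with [@nil nat]. rewrite lsum_cons, lsum_nil. simpl app. rewrite Nat.add_0_l, Rplus_0_r. reflexivity.
  - change (S j + B)%nat with (S (j + B)). rewrite words_S, IHj, words_S. apply lsum_ext. intros ys _.
    rewrite lsum_swap. apply lsum_ext. intros. apply lsum_ext. intros. reflexivity. Qed.

Lemma words_letters m n w : In w (words m n) -> forall a, In a w -> (a < m)%nat.
Proof. revert w; induction n; simpl; intros w Hw.
  - destruct Hw as [<-|[]]. intros a [].
  - apply in_flat_map in Hw. destruct Hw as [w' [Hw' Hin]].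
    apply in_map_iff in Hin. destruct Hin as [b [<- Hb]]. apply in_seq in Hb.
    intros a [<-|Ha]; [lia|]. eapply IHn; eauto. Qed.

Lemma wprob_app f ys zs : wprob f (ys ++ zs) = wprob f ys * wprob f zs.
Proof. induction ys; simpl; [lra|]. rewrite IHys; lra. Qed.

Lemma wprob_nonneg m f w : is_pmf m f -> (forall a, In a w -> (a < m)%nat) -> 0 <= wprob f w.
Proof. intros [Hf _]. induction w; simpl; intros H; [lra|].
  apply Rmult_le_pos. apply Hf, H; left; auto. apply IHw; intros; apply H; right; auto. Qed.

Lemma wprob_sum m f n : is_pmf m f -> lsum (words m n) (wprob f) = 1.
Proof. intros Hf. induction n.
  - change (words m 0) with [@nil nat]. rewrite lsum_cons, lsum_nil. simpl; lra.
  - rewrite words_S. rewrite <- IHn. apply lsum_ext. intros w _. simpl.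
    transitivity (lsum (seq 0 m) (fun a => wprob f w * f a)).
    apply lsum_ext; intros; simpl; lra.
    rewrite lsum_scal. destruct Hf as [_ [_ H1]]. rewrite <- sumA_lsum, H1. lra. Qed.

Lemma delta_sum m x F :
  lsum (seq 0 m) (fun a => if Nat.eqb x a then F a else 0) = if Nat.ltb x m then F x else 0.
Proof. induction m.
  - simpl. destruct (Nat.ltb_spec x 0); [lia|]. reflexivity.
  - rewrite seq_S, lsum_app, IHm, lsum_cons, lsum_nil. simpl plus.
    destruct (Nat.ltb_spec x m); destruct (Nat.ltb_spec x (S m));
    destruct (Nat.eqb_spec x m); try lia; subst; lra. Qed.

Lemma cnt_sum m (g : nat -> nat) L :
  (forall l, In l L -> (g l < m)%nat) ->
  lsum (seq 0 m) (fun a => INR (length (filter (fun l => Nat.eqb (g l) a) L))) = INR (length L).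
Proof. induction L; intros H.
  - transitivity (lsum (seq 0 m) (fun _ => 0)). apply lsum_ext; intros; reflexivity.
    rewrite lsum_const; simpl; lra.
  - simpl filter. simpl length.
    transitivity (lsum (seq 0 m) (fun a0 => (if Nat.eqb (g a) a0 then 1 else 0) +
       INR (length (filter (fun l => Nat.eqb (g l) a0) L)))).
    { apply lsum_ext. intros b _. destruct (Nat.eqb (g a) b); simpl length; try rewrite S_INR; lra. }
    rewrite lsum_plus, IHL, delta_sum by (intros; apply H; right; auto).
    assert (g a < m)%nat by (apply H; left; auto).
    destruct (Nat.ltb (g a) m) eqn:E; [|apply Nat.ltb_ge in E; lia]. rewrite S_INR; lra. Qed.

Lemma filter_shift (P P' : nat -> bool) T : forall o o',
  (forall l, (l < T)%nat -> P (o + l)%nat = P' (o' + l)%nat) ->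
  length (filter P (seq o T)) = length (filter P' (seq o' T)).
Proof. induction T; intros o o' H; simpl; auto.
  pose proof (H 0%nat ltac:(lia)) as H0. rewrite !Nat.add_0_r in H0. rewrite H0.
  assert (IH := IHT (S o) (S o')).
  destruct (P' o'); simpl; rewrite IH; auto.
  all: intros l Hl; replace (S o + l)%nat with (o + S l)%nat by lia;
  replace (S o' + l)%nat with (o' + S l)%nat by lia; apply H; lia. Qed.

Lemma letter_lt m w l : (0 < m)%nat -> (forall a, In a w -> (a < m)%nat) -> (letter w l < m)%nat.
Proof. intros Hm H. unfold letter. destruct (nth_in_or_default (l - 1) w 0%nat) as [Hi|Hd].
  apply H; auto. rewrite Hd; auto. Qed.

Lemma emp_pmf m w i j : (0 < m)%nat -> (forall a, In a w -> (a < m)%nat) -> (i <= j)%nat ->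
  is_pmf m (emp m w i j).
Proof. intros Hm Hw Hij. assert (HT : 0 < INR (S j - i)) by (apply lt_0_INR; lia).
  split; [|split].
  - intros a Ha. unfold emp. destruct (Nat.ltb a m); [|lra].
    apply Rmult_le_pos; [apply pos_INR|]. left; apply Rinv_0_lt_compat; auto.
  - intros a Ha. unfold emp. destruct (Nat.ltb a m) eqn:E; auto. apply Nat.ltb_lt in E; lia.
  - rewrite sumA_lsum. transitivity (lsum (seq 0 m) (fun a => / INR (S j - i) *
      INR (length (filter (fun l => Nat.eqb (letter w l) a) (seq i (S j - i)))))).
    { apply lsum_ext. intros a Ha. apply in_seq in Ha. unfold emp.
      destruct (Nat.ltb a m) eqn:E; [|apply Nat.ltb_ge in E; lia]. unfold Rdiv; lra. }
    rewrite lsum_scal, cnt_sum. rewrite length_seq. field. lra.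
    intros; apply letter_lt; auto. Qed.

Lemma posb_true r : posb r = true <-> 0 < r.
Proof. unfold posb. destruct (Rlt_dec 0 r); split; intros; auto; try discriminate; lra. Qed.

Lemma gibbs m f g : is_pmf m f -> is_pmf m g -> KL_geb m f g 0 = true.
Proof. intros [Hf0 [_ Hf1]] [Hg0 [_ Hg1]]. unfold KL_geb, KL.
  destruct (KL_finite m f g) eqn:E; [|reflexivity].
  destruct (Rle_dec 0 (KL_sum m f g)) as [|n]; [reflexivity|exfalso; apply n].
  unfold KL_finite in E. rewrite forallb_forall in E.
  unfold KL_sum. rewrite sumA_lsum.
  apply Rle_trans with (lsum (seq 0 m) (fun a => f a + (-1) * g a)).
  { rewrite lsum_plus, lsum_scal, <- !sumA_lsum, Hf1, Hg1. lra. }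
  apply lsum_le. intros a Ha. pose proof (E a Ha) as Ea. apply in_seq in Ha.
  assert (0 <= f a) by (apply Hf0; lia). assert (0 <= g a) by (apply Hg0; lia).
  destruct (posb (f a)) eqn:Pf.
  - simpl in Ea. apply posb_true in Ea. apply posb_true in Pf.
    assert (Hl : ln (f a / g a) = ln (f a) - ln (g a)).
    { unfold Rdiv. rewrite ln_mult by (auto; apply Rinv_0_lt_compat; auto). rewrite ln_Rinv by auto. lra. }
    assert (Hl2 : ln (g a / f a) = ln (g a) - ln (f a)).
    { unfold Rdiv. rewrite ln_mult by (auto; apply Rinv_0_lt_compat; auto). rewrite ln_Rinv by auto. lra. }
    pose proof (exp_ineq1_le (ln (g a / f a))) as He. rewrite exp_ln in He.
    2:{ apply Rdiv_lt_0_compat; auto. }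
    assert (He2 : f a * (1 + ln (g a / f a)) <= f a * (g a / f a)) by (apply Rmult_le_compat_l; lra).
    replace (f a * (g a / f a)) with (g a) in He2 by (field; lra). nra.
  - apply Rle_trans with 0; [|lra]. assert (f a <= 0).
    { destruct (Rle_dec (f a) 0); auto. exfalso. assert (0 < f a) by lra. apply posb_true in H1. congruence. }
    lra. Qed.

Definition cntw (zs : list nat) (o T a : nat) : nat :=
  length (filter (fun l => Nat.eqb (nth l zs 0%nat) a) (seq o T)).

Lemma cnt_cons_S b w o T a : cntw (b :: w) (S o) T a = cntw w o T a.
Proof. unfold cntw. apply filter_shift. intros. reflexivity. Qed.

Lemma cnt_cons_0 b w T a :
  cntw (b :: w) 0 (S T) a = ((if Nat.eqb b a then 1 else 0) + cntw w 0 T a)%nat.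
Proof. unfold cntw. rewrite <- cons_seq. simpl filter.
  destruct (Nat.eqb b a); simpl length;
  (erewrite (filter_shift _ (fun l => Nat.eqb (nth l w 0%nat) a) T 1 0); [reflexivity|intros; reflexivity]). Qed.

Definition EB m f B (F : list nat -> R) : R := lsum (words m B) (fun w => wprob f w * F w).

Lemma EB_S m f B F :
  EB m f (S B) F = EB m f B (fun w => lsum (seq 0 m) (fun b => f b * F (b :: w))).
Proof. unfold EB. rewrite words_S. apply lsum_ext. intros w _. rewrite <- lsum_scal.
  apply lsum_ext. intros. simpl. lra. Qed.

Lemma EB_le m f B F G : is_pmf m f -> (forall w, F w <= G w) -> EB m f B F <= EB m f B G.
Proof. intros Hf H. apply lsum_le. intros w Hw. apply Rmult_le_compat_l; auto.
  eapply wprob_nonneg; eauto. eapply words_letters; eauto. Qed.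

Lemma EB_lin m f B F G c : EB m f B (fun w => F w + c * G w) = EB m f B F + c * EB m f B G.
Proof. unfold EB. rewrite <- lsum_scal, <- lsum_plus. apply lsum_ext; intros; ring. Qed.

Lemma EB_one m f B : is_pmf m f -> EB m f B (fun _ => 1) = 1.
Proof. intros Hf. unfold EB. transitivity (lsum (words m B) (wprob f)). apply lsum_ext; intros; ring. apply wprob_sum; auto. Qed.

Lemma EB_ext m f B F G : (forall w, F w = G w) -> EB m f B F = EB m f B G.
Proof. intros H. unfold EB. apply lsum_ext; intros; rewrite H; auto. Qed.

Lemma bern_sum m f a u v : is_pmf m f -> (a < m)%nat ->
  lsum (seq 0 m) (fun b => f b * (if Nat.eqb b a then u else v)) = u * f a + v * (1 - f a).
Proof. intros [_ [_ Hf]] Ha.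
  transitivity (lsum (seq 0 m) (fun b => v * f b + (if Nat.eqb a b then (u - v) * f b else 0))).
  { apply lsum_ext. intros b _. rewrite Nat.eqb_sym. destruct (Nat.eqb a b); lra. }
  rewrite lsum_plus, lsum_scal, delta_sum, <- sumA_lsum, Hf.
  destruct (Nat.ltb_spec a m); [|lia]. lra. Qed.

Lemma variance m f a : is_pmf m f -> (a < m)%nat -> forall B o T, (o + T <= B)%nat ->
  EB m f B (fun w => (INR (cntw w o T a) - INR T * f a) ^ 2) = INR T * f a * (1 - f a).
Proof. intros Hf Ha B. induction B; intros o T HB.
  - assert (o = 0%nat /\ T = 0%nat) as [-> ->] by lia. unfold EB. simpl. unfold cntw. simpl.
    unfold lsum. simpl. lra.
  - rewrite EB_S. destruct o as [|o].
    + destruct T as [|T].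
      * transitivity (EB m f B (fun _ => 0)).
        apply EB_ext. intros w. transitivity (lsum (seq 0 m) (fun b => 0 * f b)).
        apply lsum_ext. intros. unfold cntw. simpl. lra. rewrite lsum_scal. lra.
        unfold EB. transitivity (lsum (words m B) (fun _ => 0)). apply lsum_ext; intros; lra.
        rewrite lsum_const. simpl. lra.
      * transitivity (EB m f B (fun w => (INR (cntw w 0 T a) - INR T * f a) ^ 2 + (f a * (1 - f a)) * 1)).
        { apply EB_ext. intros w.
          transitivity (lsum (seq 0 m) (fun b => f b * (if Nat.eqb b a then
            (INR (cntw w 0 T a) + 1 - INR (S T) * f a) ^ 2 else (INR (cntw w 0 T a) - INR (S T) * f a) ^ 2))).
          { apply lsum_ext. intros b _. rewrite cnt_cons_0. destruct (Nat.eqb b a).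
            rewrite plus_INR. simpl (INR 1). f_equal; f_equal; lra. simpl plus. reflexivity. }
          rewrite bern_sum; auto. rewrite S_INR. ring. }
        rewrite EB_lin, EB_one, IHB by (auto; lia). rewrite S_INR. ring.
    + transitivity (EB m f B (fun w => (INR (cntw w o T a) - INR T * f a) ^ 2)).
      { apply EB_ext. intros w. transitivity (lsum (seq 0 m) (fun b => (INR (cntw w o T a) - INR T * f a) ^ 2 * f b)).
        apply lsum_ext. intros. rewrite cnt_cons_S. lra.
        rewrite lsum_scal, <- sumA_lsum. destruct Hf as [_ [_ ->]]. lra. }
      apply IHB. lia. Qed.

Definition bad f (zs : list nat) o T a (eta : R) : R :=
  if Rle_dec (Rabs (INR (cntw zs o T a) - INR T * f a)) (INR T * eta) then 0 else 1.

Lemma bad_bound m f a B o T eta : is_pmf m f -> (a < m)%nat -> (o + T <= B)%nat ->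
  0 < INR T -> 0 < eta ->
  EB m f B (fun w => bad f w o T a eta) <= / (INR T * eta ^ 2).
Proof. intros Hf Ha HB HT He.
  apply Rle_trans with (EB m f B (fun w => / (INR T * eta) ^ 2 * (INR (cntw w o T a) - INR T * f a) ^ 2)).
  { apply EB_le; auto. intros w. unfold bad. destruct Rle_dec as [|Hn].
    apply Rmult_le_pos. left. apply Rinv_0_lt_compat. apply pow_lt. nra. apply pow2_ge_0.
    apply Rnot_le_lt in Hn. set (x := INR (cntw w o T a) - INR T * f a) in *.
    assert (Hx : (INR T * eta) ^ 2 < x ^ 2).
    { rewrite <- (pow2_abs x). assert (0 <= INR T * eta) by nra. nra. }
    apply Rmult_le_reg_l with ((INR T * eta) ^ 2). apply pow_lt; nra.
    rewrite <- Rmult_assoc, Rinv_r by (apply pow_nonzero; nra). lra. }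
  transitivity (/ (INR T * eta) ^ 2 * EB m f B (fun w => (INR (cntw w o T a) - INR T * f a) ^ 2)).
  { right. unfold EB. rewrite <- lsum_scal. apply lsum_ext; intros; lra. }
  rewrite variance by auto.
  assert (f a * (1 - f a) <= 1) by nra.
  replace (/ (INR T * eta ^ 2)) with (/ (INR T * eta) ^ 2 * (INR T * 1)) by (field; lra).
  apply Rmult_le_compat_l. left; apply Rinv_0_lt_compat, pow_lt; nra.
  rewrite Rmult_assoc. apply Rmult_le_compat_l; lra. Qed.

Lemma in_firstn {A} k (x : list A) a : In a (firstn k x) -> In a x.
Proof. intros H. rewrite <- (firstn_skipn k x). apply in_or_app; auto. Qed.


Lemma st_S_fst m q cS cD fstar sel x k :
  fst (ipt_state m q cS cD fstar sel x (S k)) =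
  (let tau := fst (ipt_state m q cS cD fstar sel x k) in
   let w := firstn (S k) x in let i := sel tau (S k) w in let n := (S (S k) - i)%nat in
   if andb (if Rle_dec cS (Qw m q w i (S k)) then true else false)
       (negb (KL_geb m (emp m w i (S k)) (fstar n) (cD n))) then S (S k) else tau).
Proof. simpl. destruct (ipt_state m q cS cD fstar sel x k). reflexivity. Qed.

Lemma st_S_snd m q cS cD fstar sel x k :
  snd (ipt_state m q cS cD fstar sel x (S k)) =
  (let tau := fst (ipt_state m q cS cD fstar sel x k) in
   let w := firstn (S k) x in let i := sel tau (S k) w in let n := (S (S k) - i)%nat in
   orb (snd (ipt_state m q cS cD fstar sel x k))
   (andb (if Rle_dec cS (Qw m q w i (S k)) then true else false)
       (KL_geb m (emp m w i (S k)) (fstar n) (cD n)))).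
Proof. simpl. destruct (ipt_state m q cS cD fstar sel x k). reflexivity. Qed.

Lemma tau_bounds m q cS cD fstar sel x k :
  (1 <= fst (ipt_state m q cS cD fstar sel x k) <= S k)%nat.
Proof. induction k; [simpl; lia|]. rewrite st_S_fst. cbv zeta.
  destruct (andb _ _); lia. Qed.

Lemma tau_step m q cS cD fstar sel x k :
  fst (ipt_state m q cS cD fstar sel x (S k)) = fst (ipt_state m q cS cD fstar sel x k) \/
  fst (ipt_state m q cS cD fstar sel x (S k)) = S (S k).
Proof. rewrite st_S_fst. cbv zeta. destruct (andb _ _); auto. Qed.

Lemma tau_mono m q cS cD fstar sel x k k' : (k <= k')%nat ->
  (fst (ipt_state m q cS cD fstar sel x k) <= fst (ipt_state m q cS cD fstar sel x k'))%nat.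
Proof. induction 1; auto. pose proof (tau_step m q cS cD fstar sel x m0).
  pose proof (tau_bounds m q cS cD fstar sel x m0). lia. Qed.

Lemma stop_mono m q cS cD fstar sel x k k' : (k <= k')%nat ->
  snd (ipt_state m q cS cD fstar sel x k) = true -> snd (ipt_state m q cS cD fstar sel x k') = true.
Proof. induction 1; auto. intros Hs. rewrite st_S_snd. cbv zeta. rewrite IHle; auto. Qed.

Lemma prefix_inv m q cS cD fstar sel x x' k : firstn k x = firstn k x' ->
  ipt_state m q cS cD fstar sel x k = ipt_state m q cS cD fstar sel x' k.
Proof. revert x x'. induction k; intros x x' H; auto. cbn [ipt_state].
  rewrite (IHk x x'). rewrite H. reflexivity.
  rewrite <- (Nat.min_l k (S k)) by lia. rewrite <- !firstn_firstn, H. reflexivity. Qed.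

Lemma step_lemma m q cS cD fstar sel f0 Lam x k :
  (0 < m)%nat -> (forall a, In a x -> (a < m)%nat) -> 0 < cS ->
  (forall n, INR n <= Lam -> cD n = 0) ->
  (forall n, (1 <= n)%nat -> is_fstar m q f0 (cS / INR n) (fstar n)) ->
  (forall tau k w, (tau <= S k)%nat -> is_window_max m q tau k w (sel tau k w)) ->
  snd (ipt_state m q cS cD fstar sel x (S k)) = false ->
  (forall i, (fst (ipt_state m q cS cD fstar sel x k) <= i <= S (S k))%nat ->
     cS <= Qw m q (firstn (S k) x) i (S k) ->
     fst (ipt_state m q cS cD fstar sel x (S k)) = S (S k)) /\
  (fst (ipt_state m q cS cD fstar sel x (S k)) = S (S k) ->
     Lam < INR (S (S k) - fst (ipt_state m q cS cD fstar sel x k))).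
Proof. intros Hm Hx HcS HcD Hfs Hsel Hns.
  pose proof (tau_bounds m q cS cD fstar sel x k) as Htb.
  rewrite st_S_snd in Hns. rewrite st_S_fst. cbv zeta in *.
  set (tau := fst (ipt_state m q cS cD fstar sel x k)) in *.
  set (w := firstn (S k) x) in *.
  assert (Hw : forall a, In a w -> (a < m)%nat) by (intros a Ha; apply Hx; eapply in_firstn; eauto).
  destruct (Hsel tau (S k) w ltac:(lia)) as [Hir Hmax].
  set (i0 := sel tau (S k) w) in *.
  apply Bool.orb_false_iff in Hns. destruct Hns as [_ Hns].
  split.
  - intros i Hi Hq. assert (cS <= Qw m q w i0 (S k)) by (eapply Rle_trans; [apply Hq|apply Hmax; auto]).
    destruct (Rle_dec cS (Qw m q w i0 (S k))) as [_|]; [|lra].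
    simpl in *. rewrite Hns. reflexivity.
  - destruct (Rle_dec cS (Qw m q w i0 (S k))) as [Hs|]; simpl; [|lia].
    destruct (KL_geb m (emp m w i0 (S k)) (fstar (S (S k) - i0)%nat) (cD (S (S k) - i0)%nat)) eqn:Hd;
      simpl; [discriminate|]. intros _.
    destruct (Rlt_dec Lam (INR (S (S k) - tau))) as [|Hn]; auto. exfalso.
    apply Rnot_lt_le in Hn.
    assert (Hi0 : (i0 <= S k)%nat).
    { destruct (Nat.eq_dec i0 (S (S k))) as [E|]; [|lia]. exfalso. unfold Qw in Hs.
      rewrite E, Nat.sub_diag in Hs. simpl in Hs. lra. }
    set (n := (S (S k) - i0)%nat) in *.
    assert (HcDn : cD n = 0). { apply HcD. eapply Rle_trans; [|apply Hn]. apply le_INR. unfold n; lia. }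
    rewrite HcDn in Hd.
    assert (Hpe : is_pmf m (emp m w i0 (S k))) by (apply emp_pmf; auto).
    assert (Hn1 : (1 <= n)%nat) by (unfold n; lia).
    destruct (Hfs n Hn1) as [Hpf _].
    { exists (emp m w i0 (S k)). split; auto. unfold Qw in Hs. fold n in Hs.
      assert (0 < INR n) by (apply lt_0_INR; lia).
      apply Rmult_le_reg_l with (INR n); auto. unfold Rdiv. rewrite <- Rmult_assoc, Rinv_r_simpl_m; lra. }
    rewrite gibbs in Hd; auto. discriminate. Qed.

Lemma block_stop m q cS cD fstar sel f0 Lam x s T d K :
  (0 < m)%nat -> (forall a, In a x -> (a < m)%nat) -> 0 < cS ->
  (forall n, INR n <= Lam -> cD n = 0) ->
  (forall n, (1 <= n)%nat -> is_fstar m q f0 (cS / INR n) (fstar n)) ->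
  (forall tau k w, (tau <= S k)%nat -> is_window_max m q tau k w (sel tau k w)) ->
  (1 <= T)%nat -> (1 <= d)%nat -> (T <= K * d)%nat -> INR (d + T) <= Lam ->
  (forall j, (j <= K)%nat -> cS <= Qw m q (firstn (s + j * d + T) x) (s + 1 + j * d) (s + j * d + T)) ->
  snd (ipt_state m q cS cD fstar sel x (s + (K * d + T))) = true.
Proof. intros Hm Hx HcS HcD Hfs Hsel HT Hd HK HL Hgood.
  destruct (snd (ipt_state m q cS cD fstar sel x (s + (K * d + T)))) eqn:Hns; auto. exfalso.
  set (ST := ipt_state m q cS cD fstar sel x) in *.
  assert (Hnot : forall k, (k <= s + (K * d + T))%nat -> snd (ST k) = false).
  { intros k Hk. destruct (snd (ST k)) eqn:E; auto. pose proof (stop_mono _ _ _ _ _ _ x k _ Hk E) as E2. fold ST in E2. congruence. }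
  assert (Hstep := fun k Hk => step_lemma m q cS cD fstar sel f0 Lam x k Hm Hx HcS HcD Hfs Hsel (Hnot (S k) Hk)).
  assert (H1 : (s + 2 <= fst (ST (s + T)))%nat).
  { destruct (le_lt_dec (fst (ST (s + T - 1)%nat)) (s + 1)) as [Hle|Hgt].
    - destruct (Hstep (s + T - 1)%nat ltac:(nia)) as [Ha _].
      replace (S (s + T - 1)) with (s + T)%nat in Ha by lia.
      assert (Hq := Hgood 0%nat ltac:(lia)). rewrite Nat.mul_0_l, !Nat.add_0_r in Hq.
      fold ST in Ha. rewrite (Ha (s + 1)%nat ltac:(lia) Hq). lia.
    - pose proof (tau_mono m q cS cD fstar sel x (s + T - 1)%nat (s + T)%nat ltac:(lia)). fold ST in H. lia. }
  set (r1 := fst (ST (s + T)%nat)) in *.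
  assert (Hr1 : (r1 <= S (s + T))%nat) by apply tau_bounds.
  set (D0 := (r1 - (s + 1))%nat).
  set (j := ((D0 + d - 1) / d)%nat).
  assert (Hj1 : (d * j <= D0 + d - 1)%nat) by (apply Nat.Div0.mul_div_le; lia).
  assert (Hj2 : (D0 + d - 1 < d * S j)%nat) by (apply Nat.mul_succ_div_gt; lia).
  assert (HjK : (j <= K)%nat).
  { destruct (le_lt_dec j K) as [|Hc]; auto. exfalso.
    assert (d * S K <= d * j)%nat by (apply Nat.mul_le_mono_l; lia). nia. }
  set (e := (s + j * d + T)%nat).
  assert (Hjd : (D0 <= j * d <= D0 + d - 1)%nat) by nia.
  assert (He1 : (s + T + 1 <= e)%nat) by (unfold e; lia).
  assert (HeB : (e <= s + (K * d + T))%nat).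
  { unfold e. assert (j * d <= K * d)%nat by (apply Nat.mul_le_mono_r; auto). lia. }
  assert (Hinv : forall t, (s + T + t <= e - 1)%nat -> fst (ST (s + T + t)%nat) = r1).
  { induction t; intros Ht. rewrite Nat.add_0_r; reflexivity.
    replace (s + T + S t)%nat with (S (s + T + t)) by lia.
    destruct (tau_step m q cS cD fstar sel x (s + T + t)%nat) as [E|E]; fold ST in E.
    rewrite E; apply IHt; lia. exfalso.
    destruct (Hstep (s + T + t)%nat ltac:(lia)) as [_ Hb]. fold ST in Hb.
    specialize (Hb E). rewrite IHt in Hb by lia.
    assert (INR (S (S (s + T + t)) - r1) <= Lam); [|lra].
    eapply Rle_trans; [|apply HL]. apply le_INR. unfold D0 in *. lia. }
  assert (He := Hinv (e - 1 - (s + T))%nat ltac:(lia)).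
  replace (s + T + (e - 1 - (s + T)))%nat with (e - 1)%nat in He by lia.
  destruct (Hstep (e - 1)%nat ltac:(lia)) as [Ha Hb]. fold ST in Ha, Hb.
  replace (S (e - 1)) with e in Ha, Hb by lia. rewrite He in Ha, Hb.
  assert (Hq := Hgood j HjK). fold e in Hq.
  specialize (Hb (Ha (s + 1 + j * d)%nat ltac:(unfold D0 in *; lia) Hq)).
  assert (INR (S e - r1) <= Lam); [|lra].
  eapply Rle_trans; [|apply HL]. apply le_INR. unfold e, D0 in *. lia. Qed.

Lemma lsum_ge_term {A} (l : list A) F x : In x l -> (forall y, In y l -> 0 <= F y) -> F x <= lsum l F.
Proof. induction l; intros Hx H; [destruct Hx|]. rewrite lsum_cons. destruct Hx as [<-|Hx].
  - assert (0 <= lsum l F) by (apply lsum_nonneg; intros; apply H; right; auto). lra.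
  - assert (F x <= lsum l F) by (apply IHl; auto; intros; apply H; right; auto).
    assert (0 <= F a) by (apply H; left; auto). lra. Qed.

Lemma EB_lsum {A} m f B (l : list A) F :
  EB m f B (fun w => lsum l (fun j => F j w)) = lsum l (fun j => EB m f B (F j)).
Proof. unfold EB. rewrite <- lsum_swap. apply lsum_ext. intros w _. rewrite <- lsum_scal. reflexivity. Qed.

Lemma window_emp m h zs o T a : (1 <= T)%nat ->
  emp m (firstn (length h + o + T) (h ++ zs)) (length h + 1 + o) (length h + o + T) a =
  if Nat.ltb a m then INR (cntw zs o T a) / INR T else 0.
Proof. intros HT. unfold emp. replace (S (length h + o + T) - (length h + 1 + o))%nat with T by lia.
  destruct (Nat.ltb a m); auto. f_equal. f_equal. unfold cntw. apply filter_shift.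
  intros l Hl. unfold letter. rewrite nth_firstn.
  destruct (Nat.ltb_spec (length h + 1 + o + l - 1) (length h + o + T)); [|lia].
  rewrite app_nth2 by lia. f_equal. f_equal. lia. Qed.

Lemma window_good m q L f1 qlow cS h zs o T eta :
  (0 < m)%nat -> (forall a, In a zs -> (a < m)%nat) -> (forall a, In a h -> (a < m)%nat) ->
  is_pmf m f1 -> qlow <= q f1 -> lipschitz_on m q L -> 0 <= L -> (1 <= T)%nat ->
  cS <= INR T * (qlow - L * (INR m * eta)) ->
  (forall a, (a < m)%nat -> Rabs (INR (cntw zs o T a) - INR T * f1 a) <= INR T * eta) ->
  cS <= Qw m q (firstn (length h + o + T) (h ++ zs)) (length h + 1 + o) (length h + o + T).
Proof. intros Hm Hz Hh Hf Hq Hlip HL HT Hc Hb. unfold Qw.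
  replace (S (length h + o + T) - (length h + 1 + o))%nat with T by lia.
  set (g := emp m (firstn (length h + o + T) (h ++ zs)) (length h + 1 + o) (length h + o + T)).
  assert (HTp : 0 < INR T) by (apply lt_0_INR; lia).
  assert (Hg : is_pmf m g).
  { apply emp_pmf; auto. intros a Ha. apply in_firstn in Ha. apply in_app_or in Ha. destruct Ha; auto. lia. }
  assert (Hl1 : l1dist m g f1 <= INR m * eta).
  { unfold l1dist. rewrite sumA_lsum. apply Rle_trans with (lsum (seq 0 m) (fun _ => eta)).
    apply lsum_le. intros a Ha. apply in_seq in Ha. unfold g. rewrite window_emp by auto.
    destruct (Nat.ltb_spec a m); [|lia]. specialize (Hb a ltac:(lia)).
    replace (INR (cntw zs o T a) / INR T - f1 a) with ((INR (cntw zs o T a) - INR T * f1 a) / INR T) by (field; lra).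
    unfold Rdiv. rewrite Rabs_mult, Rabs_inv, (Rabs_right (INR T)) by lra.
    apply Rmult_le_reg_r with (INR T); auto. rewrite Rmult_assoc, Rinv_l by lra. lra.
    rewrite lsum_const, length_seq. lra. }
  pose proof (Hlip g f1 Hg Hf) as Hl.
  assert (q f1 - q g <= L * l1dist m g f1).
  { eapply Rle_trans; [apply Rle_abs|]. rewrite Rabs_minus_sym; auto. }
  assert (L * l1dist m g f1 <= L * (INR m * eta)) by (apply Rmult_le_compat_l; auto).
  eapply Rle_trans; [apply Hc|]. apply Rmult_le_compat_l; lra. Qed.

Lemma bad_01 f zs o T a eta : bad f zs o T a eta = 0 \/ bad f zs o T a eta = 1.
Proof. unfold bad. destruct Rle_dec; auto. Qed.

Lemma block_prob m q L f1 qlow cS cD fstar sel f0 Lam h T d K eta :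
  (0 < m)%nat -> (forall a, In a h -> (a < m)%nat) ->
  is_pmf m f1 -> qlow <= q f1 -> lipschitz_on m q L -> 0 <= L -> 0 < cS ->
  (forall n, INR n <= Lam -> cD n = 0) ->
  (forall n, (1 <= n)%nat -> is_fstar m q f0 (cS / INR n) (fstar n)) ->
  (forall tau k w, (tau <= S k)%nat -> is_window_max m q tau k w (sel tau k w)) ->
  (1 <= T)%nat -> (1 <= d)%nat -> (T <= K * d)%nat -> INR (d + T) <= Lam -> 0 < eta ->
  cS <= INR T * (qlow - L * (INR m * eta)) ->
  lsum (words m (K * d + T)) (fun zs => wprob f1 zs *
     (if snd (ipt_state m q cS cD fstar sel (h ++ zs) (length h + (K * d + T))) then 0 else 1))
  <= INR (S K) * (INR m * / (INR T * eta ^ 2)).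
Proof. intros Hm Hh Hf Hq Hlip HL HcS HcD Hfs Hsel HT Hd HK HLam He Hc.
  assert (HTp : 0 < INR T) by (apply lt_0_INR; lia).
  apply Rle_trans with (EB m f1 (K * d + T) (fun zs => lsum (seq 0 (S K)) (fun j =>
     lsum (seq 0 m) (fun a => bad f1 zs (j * d) T a eta)))).
  { apply lsum_le. intros zs Hzs. apply Rmult_le_compat_l.
    eapply wprob_nonneg; eauto. eapply words_letters; eauto.
    assert (Hz := words_letters _ _ _ Hzs).
    assert (Hnn : forall j, 0 <= lsum (seq 0 m) (fun a => bad f1 zs (j * d) T a eta)).
    { intros j. apply lsum_nonneg. intros a _. destruct (bad_01 f1 zs (j*d) T a eta) as [E|E]; rewrite E; lra. }
    destruct (classic (exists j a, (j <= K)%nat /\ (a < m)%nat /\ bad f1 zs (j * d) T a eta = 1)) as [[j [a [Hj [Ha Hb]]]]|Hn].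
    - apply Rle_trans with 1. destruct (snd _); lra.
      apply Rle_trans with (lsum (seq 0 m) (fun a => bad f1 zs (j * d) T a eta)).
      + rewrite <- Hb. apply (lsum_ge_term _ (fun a => bad f1 zs (j * d) T a eta)).
        apply in_seq; lia. intros b _. destruct (bad_01 f1 zs (j*d) T b eta) as [E|E]; rewrite E; lra.
      + apply (lsum_ge_term _ (fun j => lsum (seq 0 m) (fun a => bad f1 zs (j * d) T a eta))).
        apply in_seq; lia. intros; auto.
    - rewrite (block_stop m q cS cD fstar sel f0 Lam (h ++ zs) (length h) T d K); auto.
      apply lsum_nonneg; auto.
      { intros a Ha. apply in_app_or in Ha. destruct Ha; auto. }
      intros j Hj. apply window_good with (f1 := f1) (L := L) (qlow := qlow) (eta := eta); auto.
      intros a Ha. destruct (Rle_dec (Rabs (INR (cntw zs (j * d) T a) - INR T * f1 a)) (INR T * eta)) as [|Hne]; auto.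
      exfalso. apply Hn. exists j, a. repeat split; auto. unfold bad. destruct Rle_dec; [contradiction|reflexivity]. }
  rewrite EB_lsum. apply Rle_trans with (lsum (seq 0 (S K)) (fun _ => INR m * / (INR T * eta ^ 2))).
  { apply lsum_le. intros j Hj. apply in_seq in Hj. rewrite EB_lsum.
    apply Rle_trans with (lsum (seq 0 m) (fun _ => / (INR T * eta ^ 2))).
    apply lsum_le. intros a Ha. apply in_seq in Ha. apply bad_bound; auto. lia.
    assert (j * d <= K * d)%nat by (apply Nat.mul_le_mono_r; lia). lia.
    rewrite lsum_const, length_seq. lra. }
  rewrite lsum_const, length_seq. lra. Qed.

Lemma lsum_seq_shift r : forall a b F, lsum (seq (a + b) r) F = lsum (seq a r) (fun j => F (j + b)%nat).
Proof. induction r; intros a b F; auto. simpl seq. rewrite !lsum_cons.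
  replace (S (a + b)) with (S a + b)%nat by lia. rewrite IHr. reflexivity. Qed.

Lemma series_bound (u : nat -> R) B delta :
  (1 <= B)%nat -> 0 <= delta < 1 -> (forall j, 0 <= u j <= 1) ->
  (forall j, u (j + B)%nat <= delta * u j) ->
  forall n, lsum (seq 0 n) u <= INR B / (1 - delta).
Proof. intros HB Hd Hu Hs.
  assert (Hmono : forall n r, lsum (seq 0 n) u <= lsum (seq 0 (n + r)) u).
  { intros n r. rewrite seq_app, lsum_app. assert (0 <= lsum (seq (0 + n) r) u) by (apply lsum_nonneg; intros; apply Hu). lra. }
  assert (Hle : forall n, lsum (seq 0 n) u <= INR n).
  { intros n. apply Rle_trans with (lsum (seq 0 n) (fun _ => 1)).
    apply lsum_le; intros; apply Hu. rewrite lsum_const, length_seq. lra. }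
  intros n. assert (Hn : lsum (seq 0 n) u <= INR B + delta * lsum (seq 0 n) u).
  { assert (H0 : 0 <= lsum (seq 0 n) u) by (apply lsum_nonneg; intros; apply Hu).
    destruct (le_lt_dec n B) as [Hc|Hc].
    - pose proof (Hle n). apply le_INR in Hc. nra.
    - assert (Hsplit : lsum (seq 0 n) u = lsum (seq 0 B) u + lsum (seq 0 (n - B)) (fun j => u (j + B)%nat)).
      { replace n with (B + (n - B))%nat at 1 by lia. rewrite seq_app, lsum_app.
        rewrite lsum_seq_shift. reflexivity. }
      assert (H1 : lsum (seq 0 (n - B)) (fun j => u (j + B)%nat) <= delta * lsum (seq 0 (n - B)) u).
      { rewrite <- lsum_scal. apply lsum_le; intros; apply Hs. }
      pose proof (Hle B) as H3. pose proof (Hmono (n - B)%nat B) as H2.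
      replace (n - B + B)%nat with n in H2 by lia.
      assert (delta * lsum (seq 0 (n - B)) u <= delta * lsum (seq 0 n) u) by (apply Rmult_le_compat_l; lra).
      lra. }
  apply Rmult_le_reg_r with (1 - delta). lra. unfold Rdiv. rewrite Rmult_assoc, Rinv_l by lra. lra. Qed.

Lemma words_length m n w : In w (words m n) -> length w = n.
Proof. revert w; induction n; simpl; intros w Hw.
  - destruct Hw as [<-|[]]; auto.
  - apply in_flat_map in Hw. destruct Hw as [w' [Hw' Hin]].
    apply in_map_iff in Hin. destruct Hin as [b [<- _]]. simpl. rewrite IHn; auto. Qed.

Lemma delay_bound m q cS cD fstar sel f1 xs B delta :
  is_pmf m f1 -> (forall a, In a xs -> (a < m)%nat) -> (1 <= B)%nat -> 0 <= delta < 1 ->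
  (forall h, (forall a, In a h -> (a < m)%nat) ->
     lsum (words m B) (fun zs => wprob f1 zs *
       (if snd (ipt_state m q cS cD fstar sel (h ++ zs) (length h + B)) then 0 else 1)) <= delta) ->
  forall N, delay_partial m q cS cD fstar sel f1 xs N <= INR B / (1 - delta).
Proof. intros Hf Hxs HB Hd Hblock N.
  set (u := survive_prob m q cS cD fstar sel f1 xs).
  change (delay_partial m q cS cD fstar sel f1 xs N) with (lsum (seq 0 (S N)) u).
  apply series_bound; auto.
  - intros j. unfold u, survive_prob. fold (lsum (words m j) (fun ys => wprob f1 ys *
       (if snd (ipt_state m q cS cD fstar sel (xs ++ ys) (length xs + j)) then 0 else 1))). split.
    + apply lsum_nonneg. intros ys Hys. apply Rmult_le_pos. eapply wprob_nonneg; eauto.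
      eapply words_letters; eauto. destruct (snd _); lra.
    + apply Rle_trans with (lsum (words m j) (wprob f1)); [|rewrite (wprob_sum m f1 j Hf); lra]. apply lsum_le. intros ys Hys.
      assert (0 <= wprob f1 ys) by (eapply wprob_nonneg; eauto; eapply words_letters; eauto).
      destruct (snd _); lra.
  - intros j. unfold u, survive_prob.
    fold (lsum (words m j) (fun ys => wprob f1 ys *
       (if snd (ipt_state m q cS cD fstar sel (xs ++ ys) (length xs + j)) then 0 else 1))).
    fold (lsum (words m (j + B)) (fun ys => wprob f1 ys *
       (if snd (ipt_state m q cS cD fstar sel (xs ++ ys) (length xs + (j + B))) then 0 else 1))).
    rewrite words_app, <- lsum_scal. apply lsum_le. intros ys Hys.
    assert (Hlen := words_length _ _ _ Hys).
    assert (Hy := words_letters _ _ _ Hys).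
    assert (Hwy : 0 <= wprob f1 ys) by (eapply wprob_nonneg; eauto).
    destruct (snd (ipt_state m q cS cD fstar sel (xs ++ ys) (length xs + j))) eqn:E.
    + apply Rle_trans with (lsum (words m B) (fun _ => 0)).
      * apply lsum_le. intros zs Hzs.
        assert (Hst : snd (ipt_state m q cS cD fstar sel (xs ++ ys ++ zs) (length xs + (j + B))) = true).
        { apply stop_mono with (length xs + j)%nat. lia.
          rewrite (prefix_inv _ _ _ _ _ _ _ (xs ++ ys)); auto.
          rewrite app_assoc, firstn_app. rewrite <- Hlen, <- length_app, firstn_all, Nat.sub_diag, firstn_O, app_nil_r.
          reflexivity. }
        rewrite Hst. lra.
      * rewrite lsum_const. lra.
    + apply Rle_trans with (wprob f1 ys * lsum (words m B) (fun zs => wprob f1 zs *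
       (if snd (ipt_state m q cS cD fstar sel ((xs ++ ys) ++ zs) (length (xs ++ ys) + B)) then 0 else 1))).
      * rewrite <- lsum_scal. right. apply lsum_ext. intros zs _.
        rewrite wprob_app, <- app_assoc, length_app, Hlen, Nat.add_assoc. ring.
      * apply Rle_trans with (wprob f1 ys * delta). apply Rmult_le_compat_l; auto.
        apply Hblock. intros a Ha. apply in_app_or in Ha. destruct Ha; auto. lra. Qed.

Lemma nat_ceil y : 0 <= y -> exists n, y <= INR n /\ INR n <= y + 1.
Proof. intros Hy. destruct (archimed y) as [H1 H2].
  assert (Hp : (0 < up y)%Z) by (apply lt_0_IZR; lra).
  exists (Z.to_nat (up y)). rewrite INR_IZR_INZ, Z2Nat.id by lia. lra. Qed.

Theorem theorem4 (m : nat) (q : (nat -> R) -> R) (L : R) (f0 : nat -> R)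
  (qlow : R) (P1 : (nat -> R) -> Prop) (rho : R)
  (cD : R -> nat -> R) (fstar : R -> nat -> nat -> R)
  (sel : R -> nat -> nat -> list nat -> nat) :
  (0 < m)%nat ->
  is_pmf m f0 ->
  quasiconcave_on m q ->
  lipschitz_on m q L ->
  q f0 < 0 -> 0 < qlow ->
  (exists f, P1 f) ->
  (forall f, P1 f -> is_pmf m f /\ qlow <= q f) ->
  0 < rho ->
  (forall cS n, 0 < cS -> 0 <= cD cS n) ->
  (forall cS n, 0 < cS -> INR n <= (1 + rho) * cS / qlow -> cD cS n = 0) ->
  (forall cS n, 0 < cS -> (1 <= n)%nat -> is_fstar m q f0 (cS / INR n) (fstar cS n)) ->
  (forall cS tau k w, 0 < cS -> (tau <= S k)%nat ->
     is_window_max m q tau k w (sel cS tau k w)) ->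
  forall eps, 0 < eps ->
  exists C, forall cS, C <= cS -> 0 < cS ->
    WADD_le m q P1 f0 cS (cD cS) (fstar cS) (sel cS) ((2 / qlow + eps) * cS).
Proof.
  intros Hm Hf0 _ Hlip Hq0 Hql [fs Hfs] HP1 Hrho _ HcD Hfst Hsel eps Heps.
  assert (HLp : 0 < L).
  { destruct (HP1 fs Hfs) as [Hfp Hfq]. pose proof (Hlip fs f0 Hfp Hf0) as Hl.
    assert (0 <= l1dist m fs f0) by (unfold l1dist; rewrite sumA_lsum; apply lsum_nonneg; intros; apply Rabs_pos).
    assert (0 < Rabs (q fs - q f0)) by (rewrite Rabs_right; lra).
    destruct (Rle_dec L 0); [|lra]. exfalso. assert (L * l1dist m fs f0 <= 0) by nra. lra. }
  assert (Hmp : 0 < INR m) by (apply lt_0_INR; auto).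
  set (th := Rmin (Rmin rho (eps * qlow)) 1 / 16).
  assert (Hth : 0 < th /\ th <= rho / 16 /\ th <= eps * qlow / 16 /\ th <= 1 / 16).
  { unfold th. assert (0 < eps * qlow) by nra.
    repeat split; unfold Rmin; repeat destruct Rle_dec; lra. }
  destruct Hth as [Hth0 [Hth1 [Hth2 Hth3]]].
  destruct (nat_ceil (1 / th)) as [K [HK1 _]]. { unfold Rdiv. rewrite Rmult_1_l. left; apply Rinv_0_lt_compat; auto. }
  assert (HKth : 1 <= INR K * th).
  { apply Rmult_le_reg_r with (/ th). apply Rinv_0_lt_compat; auto.
    rewrite Rmult_assoc, Rinv_r, Rmult_1_r by lra. lra. }
  assert (HK16 : 16 <= INR K) by nra.
  assert (HK1n : (1 <= K)%nat). { destruct K; [simpl in HK16; lra|lia]. }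
  set (eta := qlow * th / ((1 + th) * L * INR m)).
  assert (Heta : 0 < eta). { unfold eta. apply Rdiv_lt_0_compat. nra. apply Rmult_lt_0_compat; [nra|auto]. }
  set (M := 1 / th + (2 + INR K) / th + INR (S K) * INR m / (th * eta ^ 2)).
  assert (HM : 1 / th <= M /\ (2 + INR K) / th <= M /\ INR (S K) * INR m / (th * eta ^ 2) <= M).
  { assert (0 <= 1 / th) by (unfold Rdiv; rewrite Rmult_1_l; left; apply Rinv_0_lt_compat; auto).
    assert (0 <= (2 + INR K) / th) by (left; apply Rdiv_lt_0_compat; lra).
    assert (0 <= INR (S K) * INR m / (th * eta ^ 2)).
    { unfold Rdiv. apply Rmult_le_pos. apply Rmult_le_pos; apply pos_INR. left; apply Rinv_0_lt_compat, Rmult_lt_0_compat; auto. apply pow_lt; auto. }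
    unfold M; lra. }
  exists (qlow * M). intros cS HC HcS.
  set (c := cS / qlow).
  assert (Hc : M <= c). { unfold c. apply Rmult_le_reg_l with qlow; auto. unfold Rdiv. rewrite <- Rmult_assoc, Rinv_r_simpl_m; lra. }
  assert (HcS' : cS = qlow * c) by (unfold c; field; lra).
  destruct (nat_ceil ((1 + th) * c)) as [T [HT1 HT2]]. { assert (0 < c) by (unfold c; apply Rdiv_lt_0_compat; auto). nra. }
  destruct HM as [HM1 [HM2 HM3]].
  assert (Hc1 : 1 <= th * c).
  { assert (1 / th <= c) by lra. apply Rmult_le_reg_r with (/ th). apply Rinv_0_lt_compat; auto.
    replace (th * c * / th) with c by (field; lra). lra. }
  assert (Hc2 : 2 + INR K <= th * c).
  { assert ((2 + INR K) / th <= c) by lra. apply Rmult_le_reg_r with (/ th). apply Rinv_0_lt_compat; auto.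
    replace (th * c * / th) with c by (field; lra). lra. }
  assert (Hc3 : INR (S K) * INR m / eta ^ 2 <= th * c).
  { assert (INR (S K) * INR m / (th * eta ^ 2) <= c) by lra.
    replace (INR (S K) * INR m / eta ^ 2) with (th * (INR (S K) * INR m / (th * eta ^ 2))) by (field; split; lra).
    apply Rmult_le_compat_l; lra. }
  assert (HTp : 0 < INR T) by nra.
  assert (HT1n : (1 <= T)%nat). { destruct T; [simpl in HTp; lra|lia]. }
  set (d := (T / K + 1)%nat).
  assert (Hdiv1 : (K * (T / K) <= T)%nat) by apply Nat.Div0.mul_div_le.
  assert (Hdiv2 : (T < K * S (T / K))%nat) by (apply Nat.mul_succ_div_gt; lia).
  assert (HTKd : (T <= K * d)%nat) by (unfold d; rewrite Nat.add_1_r; lia).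
  assert (Hdiv1R : INR K * INR (T / K) <= INR T) by (rewrite <- mult_INR; apply le_INR; auto).
  assert (HdR : INR d <= th * INR T + 1).
  { unfold d. rewrite plus_INR. simpl (INR 1). assert (INR (T / K) <= th * INR T); [|lra].
    assert (INR K * INR (T / K) <= INR K * (th * INR T)) by nra.
    apply Rmult_le_reg_l with (INR K); lra. }
  set (Lam := (1 + rho) * cS / qlow).
  assert (HLam : INR (d + T) <= Lam).
  { rewrite plus_INR. unfold Lam. replace ((1 + rho) * cS / qlow) with ((1 + rho) * c) by (unfold c; field; lra).
    assert (0 < c) by nra. nra. }
  set (delta := INR (S K) * (INR m * / (INR T * eta ^ 2))).
  assert (Hdelta : 0 <= delta <= th).
  { split. unfold delta. apply Rmult_le_pos. apply pos_INR. apply Rmult_le_pos. lra.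
    left; apply Rinv_0_lt_compat, Rmult_lt_0_compat; auto; apply pow_lt; auto.
    unfold delta. assert (Hc4 : INR (S K) * INR m / eta ^ 2 <= INR T) by nra.
    replace (INR (S K) * (INR m * / (INR T * eta ^ 2))) with ((INR (S K) * INR m / eta ^ 2) / INR T) by (field; split; lra).
    apply Rmult_le_reg_r with (INR T); auto. unfold Rdiv at 1. rewrite Rmult_assoc, Rinv_l, Rmult_1_r by lra.
    assert (th * c <= th * INR T) by (apply Rmult_le_compat_l; nra). nra. }
  intros f1 Hf1 xs Hxs N.
  destruct (HP1 f1 Hf1) as [Hf1p Hf1q].
  eapply Rle_trans.
  - apply (delay_bound m q cS (cD cS) (fstar cS) (sel cS) f1 xs (K * d + T) delta Hf1p).
    + intros a Ha; apply Hxs; auto.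
    + lia.
    + lra.
    + intros h Hh.
      assert (Hcond : cS <= INR T * (qlow - L * (INR m * eta))).
      { replace (qlow - L * (INR m * eta)) with (qlow / (1 + th)) by (unfold eta; field; repeat split; lra).
        rewrite HcS'. unfold Rdiv. apply Rmult_le_reg_r with (1 + th); [lra|].
        replace (INR T * (qlow * / (1 + th)) * (1 + th)) with (INR T * qlow) by (field; lra). nra. }
      exact (block_prob m q L f1 qlow cS (cD cS) (fstar cS) (sel cS) f0 Lam h T d K eta Hm Hh Hf1p Hf1q Hlip
        ltac:(lra) HcS (fun n Hn => HcD cS n HcS Hn) (fun n Hn => Hfst cS n HcS Hn)
        (fun tau k w Hk => Hsel cS tau k w HcS Hk) HT1n ltac:(unfold d; lia) HTKd HLam Heta Hcond).
  - assert (HBR : INR (K * d + T) <= 2 * INR T + INR K).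
    { rewrite plus_INR, mult_INR. unfold d. rewrite plus_INR. simpl (INR 1). nra. }
    apply Rmult_le_reg_r with (1 - delta); [lra|].
    unfold Rdiv. rewrite Rmult_assoc, Rinv_l, Rmult_1_r by lra.
    replace ((2 * / qlow + eps) * cS) with ((2 + eps * qlow) * c) by (rewrite HcS'; field; lra).
    assert (0 < c) by nra.
    assert ((2 + 16 * th) * c <= (2 + eps * qlow) * c) by (apply Rmult_le_compat_r; lra).
    assert ((2 + 16 * th) * c * (1 - th) <= (2 + eps * qlow) * c * (1 - delta)).
    { apply Rmult_le_compat; try nra. }
    nra.
Qed.
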